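(* Let $P^{(1)},\dots,P^{(m)}$ be phase-free $n$-qubit Pauli strings in sparse form, each of weight at most $k$. In the computational model where dictionary lookup and update for a key of length $r$ cost $O(r)$ expected time, the certification-with-witness algorithm (process $i=1,\dots,m$: compute $c=(N-Z)/2$ with $Z=\sum_{A\subseteq\operatorname{supp}(P^{(i)})}(-2)^{|A|}\sum_{a\in\mathcal{L}_{P^{(i)}}(A)}D[(A,a)]$; if $c>0$ scan $j<i$ for the first $j$ with $|\operatorname{conf}(P^{(j)},P^{(i)})|$ odd and return $(j,i)$; otherwise increment $D[(A,P^{(i)}|_A)]$ for all $A\subseteq\operatorname{supp}(P^{(i)})$ and increment $N$; if the loop ends return ``all commute'') returns either a correct all-commuting certificate (all strings pairwise commute) or a correct anticommuting witness pair, in expected time $O(mk3^k)$.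
   Context: A phase-free $n$-qubit Pauli string is $P=(P_1,\dots,P_n)\in\{I,X,Y,Z\}^n$ with $I,X,Y,Z$ the identity and Pauli matrices, identified with $P_1\otimes\cdots\otimes P_n$, stored sparsely as pairs $(j,P_j)$ for $j\in\operatorname{supp}(P)=\{j:P_j\neq I\}$; its weight is $|\operatorname{supp}(P)|$. $\operatorname{conf}(P,Q)=\{j:P_j\neq I, Q_j\neq I, P_j\neq Q_j\}$. $D$ is a dictionary (initially empty, absent keys zero) keyed by labeled patterns $(A,a)$, $A$ a set of positions and $a:A\to\{X,Y,Z\}$; $N$ starts at $0$. $\mathcal{L}_P(A)=\{a:A\to\{X,Y,Z\}: a(j)\neq P_j\ \forall j\in A\}$, and $P|_A$ is $j\mapsto P_j$ on $A$. *)

(* Defs.v *)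
From HB Require Import structures.
From mathcomp Require Import all_boot all_order all_algebra all_field.
Set Implicit Arguments. Unset Strict Implicit. Unset Printing Implicit Defensive.
Import Order.TTheory GRing.Theory Num.Theory.

Inductive pauli := PI | PX | PY | PZ.

Definition pauli_to_ord (p : pauli) : 'I_4 :=
  match p with PI => inord 0 | PX => inord 1 | PY => inord 2 | PZ => inord 3 end.
Definition ord_to_pauli (i : 'I_4) : pauli :=
  match val i with 0 => PI | 1 => PX | 2 => PY | _ => PZ end.
Lemma pauli_ordK : cancel pauli_to_ord ord_to_pauli.
Proof. by case; rewrite /ord_to_pauli /= inordK. Qed.
HB.instance Definition _ := Finite.copy pauli (can_type pauli_ordK).

Definition pstring (n : nat) := {ffun 'I_n -> pauli}.
Definition pId (n : nat) : pstring n := [ffun => PI].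

Definition supp n (P : pstring n) : {set 'I_n} := [set j | P j != PI].
Definition weight n (P : pstring n) : nat := #|supp P|.
Definition conf n (P Q : pstring n) : {set 'I_n} :=
  [set j | [&& P j != PI, Q j != PI & P j != Q j]].

(* Single-qubit matrices in the computational basis (false = |0>, true = |1>). *)
Local Open Scope ring_scope.
Definition pmat (p : pauli) (x y : bool) : algC :=
  match p with
  | PI => (x == y)%:R
  | PX => (x != y)%:R
  | PY => if x == y then 0 else if x then 'i else - 'i
  | PZ => if x == y then (if x then -1 else 1) else 0
  end.

(* Matrix of P_1 (x) ... (x) P_n, indexed by computational basis states. *)
Definition basis n := {ffun 'I_n -> bool}.
Definition pop n (P : pstring n) (x y : basis n) : algC :=
  \prod_(j : 'I_n) pmat (P j) (x j) (y j).
Definition opmul n (A B : basis n -> basis n -> algC) (x y : basis n) : algC :=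
  \sum_(z : basis n) A x z * B z y.

Definition pcommute n (P Q : pstring n) : Prop :=
  forall x y, opmul (pop P) (pop Q) x y = opmul (pop Q) (pop P) x y.
Definition panticommute n (P Q : pstring n) : Prop :=
  forall x y, opmul (pop P) (pop Q) x y = - opmul (pop Q) (pop P) x y.
Local Close Scope ring_scope.

(* A labeled pattern (A, a) with a : A -> {X,Y,Z} is encoded as the Pauli string
   K with supp K = A and K j = a j on A (a bijective encoding). *)
Definition dict n := pstring n -> nat.

Definition restrict n (P : pstring n) (A : {set 'I_n}) : pstring n :=
  [ffun j => if j \in A then P j else PI].

Definition inL n (P : pstring n) (A : {set 'I_n}) (K : pstring n) : bool :=
  (supp K == A) && [forall j in A, K j != P j].

Definition Zval n (D : dict n) (P : pstring n) : int :=
  (\sum_(A in powerset (supp P))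
     (-2) ^+ #|A| * (\sum_(K : pstring n | inL P A K) (D K)%:Z))%R.

Definition cval n (D : dict n) (N : nat) (P : pstring n) : rat :=
  ((N%:Q - (Zval D P)%:~R) / 2)%R.

Definition update n (D : dict n) (P : pstring n) : dict n :=
  fun K => D K + #|[set A in powerset (supp P) | restrict P A == K]|.

Inductive outcome := AllCommute | Witness of nat & nat | Fail.

(* prefix = the strings P^(0..i-1) already processed (0-based indices). *)
Fixpoint certify_aux n (prefix : seq (pstring n)) (D : dict n) (N : nat)
    (rest : seq (pstring n)) : outcome :=
  match rest with
  | [::] => AllCommute
  | P :: rest' =>
      if (0 < cval D N P)%R then
        let j := find (fun Q => odd #|conf Q P|) prefix in
        if j < size prefix then Witness j (size prefix) else Fail
      else certify_aux (rcons prefix P) (update D P) N.+1 rest'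
  end.

Definition certify n (Ps : seq (pstring n)) : outcome :=
  certify_aux [::] (fun _ => 0) 0 Ps.

(* A dictionary lookup/update on a key of length r costs r+1 units (O(r)
   expected time, charged as its expectation bound); each conflict-parity test
   between two sparse strings costs |supp P| + |supp Q| + 1 units;
   incrementing N costs 1. *)
Definition lookup_cost n (P : pstring n) : nat :=
  \sum_(A in powerset (supp P)) \sum_(K : pstring n | inL P A K) (#|A| + 1).
Definition update_cost n (P : pstring n) : nat :=
  (\sum_(A in powerset (supp P)) (#|A| + 1)) + 1.
Definition scan_cost n (prefix : seq (pstring n)) (P : pstring n) : nat :=
  let j := find (fun Q => odd #|conf Q P|) prefix in
  \sum_(Q <- take j.+1 prefix) (weight Q + weight P + 1).

Fixpoint cost_aux n (prefix : seq (pstring n)) (D : dict n) (N : nat)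
    (rest : seq (pstring n)) : nat :=
  match rest with
  | [::] => 0
  | P :: rest' =>
      lookup_cost P +
      (if (0 < cval D N P)%R then scan_cost prefix P
       else update_cost P + cost_aux (rcons prefix P) (update D P) N.+1 rest')
  end.

Definition cost n (Ps : seq (pstring n)) : nat := cost_aux [::] (fun _ => 0) 0 Ps.

(* Main.v *)
Require Import Defs.
From HB Require Import structures.
From mathcomp Require Import all_boot all_order all_algebra all_field.
From mathcomp Require Import ring lra zify.
Set Implicit Arguments. Unset Strict Implicit. Unset Printing Implicit Defensive.
Import Order.TTheory GRing.Theory Num.Theory.
Local Open Scope ring_scope.

Lemma sum_powerset (R : comNzRingType) (T:finType) (S : {set T}) (x : R) :
  \sum_(A in powerset S) x ^+ #|A| = (1 + x) ^+ #|S|.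
Proof.
rewrite (partition_big (fun A : {set T} => (inord #|A| : 'I_#|S|.+1)) xpredT) //=.
rewrite exprDn; apply: eq_bigr => i _.
rewrite (eq_bigr (fun _ => x ^+ i)); last first.
  move=> A /andP[] ; rewrite powersetE => sub /eqP <-.
  by rewrite inordK // ltnS subset_leq_card.
rewrite sumr_const expr1n mul1r; congr (_ *+ _).
rewrite -cards_draws; apply: eq_card => A; rewrite inE unfold_in /= powersetE.
case sub: (A \subset S) => //=.
by rewrite -val_eqE /= inordK // ltnS subset_leq_card.
Qed.

Lemma peqE (p q : pauli) : (p == q) = match p, q with PI,PI | PX,PX|PY,PY|PZ,PZ => true | _,_ => false end.
Proof.
case: p; case: q => //; try (by rewrite eqxx);
  apply/negP => /eqP H; discriminate H.
Qed.

Definition sgnp (p q : pauli) : algC :=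
  if [&& p != PI, q != PI & p != q] then -1 else 1.

Lemma pmat_comm p q x y :
  \sum_(b : bool) pmat p x b * pmat q b y =
  sgnp p q * \sum_(b : bool) pmat q x b * pmat p b y.
Proof.
have ii : 'i * 'i = -1 :> algC by rewrite -expr2 sqrCi.
case: p; case: q; case: x; case: y;
  rewrite /sgnp !peqE /= !big_bool /= ?mul0r ?mulr0 ?mul1r ?mulr1 ?add0r ?addr0
   ?mulrN ?mulNr ?opprK ?ii ?mulN1r ?opprK ?oppr0 //.
all: rewrite ?mul0r ?mulr0 ?mul1r ?mulr1 ?oppr0 ?mulrN ?mulNr ?opprK ?mul1r ?mulr1 //.
Qed.

Lemma opmul_pop n (P Q : pstring n) x y : opmul (pop P) (pop Q) x y =
  \prod_j \sum_(b : bool) pmat (P j) (x j) b * pmat (Q j) b (y j).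
Proof.
rewrite /opmul bigA_distr_bigA /=; apply: eq_bigr => z _.
by rewrite /pop -big_split.
Qed.

Lemma opmul_sign n (P Q : pstring n) x y : opmul (pop P) (pop Q) x y =
  (-1) ^+ #|conf P Q| * opmul (pop Q) (pop P) x y.
Proof.
rewrite !opmul_pop (eq_bigr _ (fun j _ => pmat_comm _ _ _ _)) big_split /=.
congr (_ * _).
rewrite (eq_bigr (fun j => if j \in conf P Q then -1 else 1)); last first.
  by move=> j _; rewrite /sgnp inE.
by rewrite -big_mkcond prodr_const.
Qed.

Lemma conf_sym n (P Q : pstring n) : conf P Q = conf Q P.
Proof. by apply/setP => j; rewrite !inE [P j == Q j]eq_sym; case: (P j != PI); case: (Q j != PI). Qed.

Lemma even_comm n (P Q : pstring n) : ~~ odd #|conf P Q| -> pcommute P Q.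
Proof.
move=> ev x y; rewrite opmul_sign -signr_odd (negbTE ev) expr0 mul1r //.
Qed.

Lemma odd_anti n (P Q : pstring n) : odd #|conf P Q| -> panticommute P Q.
Proof.
move=> od x y; rewrite opmul_sign -signr_odd od expr1 mulN1r //.
Qed.

Lemma supp_restrict n (Q : pstring n) (A : {set 'I_n}) : A \subset supp Q -> supp (restrict Q A) = A.
Proof.
move=> /subsetP sAQ; apply/setP => j; rewrite !inE ffunE.
case jA: (j \in A); last by rewrite eqxx.
by move: (sAQ j jA); rewrite inE.
Qed.

Lemma L1 n (P Q : pstring n) (A : {set 'I_n}) : A \subset supp P ->
  (\sum_(K | inL P A K) #|[set A' in powerset (supp Q) | restrict Q A' == K]|)%N
  = (A \subset conf Q P : nat).
Proof.
move=> sAP.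
rewrite (eq_bigr (fun K => \sum_(A' in powerset (supp Q)) (restrict Q A' == K : nat))%N);
  last first.
  move=> K _; rewrite -sum1_card [LHS]big_mkcond [RHS]big_mkcond /=.
  by apply: eq_bigr => A' _; rewrite inE; case: (A' \in _); case: (_ == K).
rewrite exchange_big /=.
rewrite (eq_bigr (fun A' => if inL P A (restrict Q A') then 1 else 0)%N); last first.
  move=> A' _; rewrite big_mkcond /= (bigD1 (restrict Q A')) //= eqxx big1 ?addn0 //.
  by move=> K /negbTE; rewrite eq_sym => ->; case: ifP.
have inLE : forall A', A' \in powerset (supp Q) ->
   inL P A (restrict Q A') = (A' == A) && [forall j in A, Q j != P j].
  move=> A'; rewrite powersetE => sA'; rewrite /inL supp_restrict //.
  case: eqP => //= ->; apply: eq_forallb => j; rewrite ffunE.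
  by case: (j \in A).
have [sAQ | nsAQ] := boolP (A \subset supp Q).
  rewrite (bigD1 A) ?powersetE //= inLE ?powersetE // eqxx /= big1 ?addn0.
    congr (nat_of_bool _).
    apply/forall_inP/subsetP => [H j jA | H j jA].
      have := subsetP sAQ j jA; have := subsetP sAP j jA; rewrite !inE => -> ->.
      by rewrite H.
    by have := H j jA; rewrite inE => /and3P[].
  by move=> A' /andP[pA' nA']; rewrite inLE // (negbTE nA').
rewrite big1.
  case: (boolP (A \subset conf Q P)) => // /subsetP H; case/negP: nsAQ.
  by apply/subsetP => j /H; rewrite !inE => /and3P[].
move=> A' pA'; rewrite inLE //; case: eqP => // eA; move: pA'.
by rewrite eA powersetE (negbTE nsAQ).
Qed.

Lemma conf_supp n (Q P : pstring n) : conf Q P \subset supp P.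
Proof. by apply/subsetP => j; rewrite !inE => /and3P[]. Qed.

Lemma Zval_update n (D : dict n) (Q P : pstring n) :
  Zval (update D Q) P = Zval D P + (-1) ^+ #|conf Q P|.
Proof.
rewrite /Zval /update.
rewrite (eq_bigr (fun A : {set 'I_n} => (-2) ^+ #|A| * (\sum_(K | inL P A K) (D K)%:Z)
    + (-2) ^+ #|A| * (A \subset conf Q P : nat)%:Z)); last first.
  move=> A; rewrite powersetE => sAP; rewrite -mulrDr; congr (_ * _).
  rewrite -(L1 Q sAP) (big_morph Posz PoszD (erefl (Posz 0))) -big_split /=.
  by apply: eq_bigr => K _; rewrite PoszD.
rewrite big_split /=; congr (_ + _).
rewrite -(sum_powerset (conf Q P) (-2 : int)).
rewrite [LHS]big_mkcond [RHS]big_mkcond; apply: eq_bigr => A _.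
rewrite !powersetE.
case sAC: (A \subset conf Q P).
  by rewrite (subset_trans sAC (conf_supp Q P)) mulr1.
by case: (A \subset supp P); rewrite ?mulr0.
Qed.

Definition Dof n (s : seq (pstring n)) : dict n := foldl (@update n) (fun _ => 0%N) s.

Lemma Zval_Dof n (s : seq (pstring n)) P :
  Zval (Dof s) P = \sum_(Q <- s) (-1) ^+ #|conf Q P|.
Proof.
elim/last_ind: s => [|s Q IH].
  rewrite big_nil /Zval big1 // => A _; rewrite big1 ?mulr0 //.
rewrite /Dof foldl_rcons -/(Dof s) Zval_update IH big_rcons /= addrC //.
Qed.

Lemma sizeZ n (s : seq (pstring n)) P :
  (size s)%:Z - \sum_(Q <- s) (-1) ^+ #|conf Q P| =
  (count (fun Q => odd #|conf Q P|) s)%:Z * 2.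
Proof.
elim: s => [|Q s IH]; first by rewrite big_nil.
rewrite big_cons /= -signr_odd.
have -> : (size s).+1%:Z = 1 + (size s)%:Z by rewrite -PoszD add1n.
rewrite PoszD mulrDl -IH.
set c := \sum_(_ <- s) _.
by case: (odd #|conf Q P|); rewrite /= ?expr1 ?expr0; ring.
Qed.

Lemma cval_count n (s : seq (pstring n)) P :
  cval (Dof s) (size s) P = (count (fun Q => odd #|conf Q P|) s)%:R.
Proof.
rewrite /cval Zval_Dof -intrB sizeZ intrM /= -[RHS]mulr1.
rewrite -mulrA; congr (_ * _); by rewrite divff.
Qed.

Lemma conf_self n (P : pstring n) : conf P P = set0.
Proof. by apply/setP => j; rewrite !inE eqxx !andbF. Qed.

Lemma certify_ok n (rest prefix : seq (pstring n)) :
  {in prefix &, forall Q R, ~~ odd #|conf Q R|} ->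
  match certify_aux prefix (Dof prefix) (size prefix) rest with
  | AllCommute => {in prefix ++ rest &, forall Q R, ~~ odd #|conf Q R|}
  | Witness j i => (j < i < size (prefix ++ rest))%N /\
      odd #|conf (nth (pId n) (prefix ++ rest) j) (nth (pId n) (prefix ++ rest) i)|
  | Fail => False
  end.
Proof.
elim: rest prefix => [|P rest IH] prefix Hpre /=; first by rewrite cats0.
rewrite cval_count ltr0n -has_count.
case: ifP => [hasP | nhasP].
  rewrite -has_find hasP; split.
    by rewrite -has_find hasP /= size_cat /= addnS ltnS leq_addr.
  rewrite nth_cat -has_find hasP nth_cat ltnn subnn /=.
  exact: (nth_find (pId n) hasP).
have Hpre' : {in rcons prefix P &, forall Q R, ~~ odd #|conf Q R|}.
  move=> Q R; rewrite !mem_rcons !inE => /orP[/eqP-> | HQ] /orP[/eqP-> | HR].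
  - by rewrite conf_self cards0.
  - rewrite conf_sym; apply/negP => od; case/negP: nhasP.
    by apply/hasP; exists R.
  - apply/negP => od; case/negP: nhasP; by apply/hasP; exists Q.
  - exact: Hpre.
have := IH (rcons prefix P) Hpre'.
by rewrite /Dof foldl_rcons size_rcons cat_rcons.
Qed.

Local Open Scope nat_scope.

Lemma card_pauli : #|{: pauli}| = 4.
Proof.
rewrite -(card_ord 4); apply: (bij_eq_card (f := pauli_to_ord)).
exists ord_to_pauli; first exact: pauli_ordK.
case=> [[|[|[|[|m]]]] Hi] //; apply/val_inj; by rewrite /= inordK.
Qed.

Lemma sum_le_seq (T : eqType) (s : seq T) (f : T -> nat) c :
  (forall x, x \in s -> f x <= c) -> \sum_(x <- s) f x <= size s * c.
Proof.
elim: s => [|x s IH] H; first by rewrite big_nil.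
rewrite big_cons /= mulSn leq_add ?H ?mem_head // IH // => y ys.
by apply: H; rewrite inE ys orbT.
Qed.

Definition famF n (P : pstring n) (x : 'I_n) : pred pauli :=
  if P x == PI then pred1 PI else predC1 (P x).

Lemma card_famF n (P : pstring n) :
  #|(family (famF P) : simpl_pred (pstring n))| = 3 ^ #|supp P|.
Proof.
rewrite card_family foldrE big_map big_enum /=.
rewrite (eq_bigr (fun x => if x \in supp P then 3 else 1)); last first.
  move=> x _; rewrite /famF inE; case: eqP => _ /=; first by rewrite card1.
  by rewrite cardC1 card_pauli.
by rewrite -big_mkcond prod_nat_const.
Qed.

Lemma lookup_bound n (P : pstring n) k : weight P <= k -> lookup_cost P <= k.+1 * 3 ^ k.
Proof.
move=> wP; rewrite /lookup_cost.
apply: (@leq_trans (\sum_(A in powerset (supp P)) \sum_(K | inL P A K) k.+1)).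
  apply: leq_sum => A; rewrite powersetE => sAP; apply: leq_sum => K _.
  by rewrite addn1 ltnS (leq_trans (subset_leq_card sAP)).
rewrite (eq_bigr (fun A => \sum_K (if inL P A K then k.+1 else 0))); last first.
  by move=> A _; rewrite big_mkcond.
rewrite exchange_big /=.
apply: (@leq_trans (\sum_K (if K \in family (famF P) then k.+1 else 0))).
  apply: leq_sum => K _.
  rewrite big_mkcond (bigD1 (supp K)) //= big1 ?addn0; last first.
    move=> A nA; rewrite /inL eq_sym (negbTE nA) /=; by case: ifP.
  rewrite powersetE; case sKP: (supp K \subset supp P) => //.
  case iL: (inL P (supp K) K) => //.
  suff -> : K \in family (famF P) by [].
  apply/familyP => x; rewrite /famF.
  move: iL; rewrite /inL eqxx /= => /forall_inP H.
  case: eqP => Px /=.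
    apply/negPn/negP => Kx.
    have : x \in supp P by apply: (subsetP sKP); rewrite inE.
    by rewrite inE Px eqxx.
  case xK: (x \in supp K); first by rewrite inE; apply: H.
  move: xK; rewrite inE => /negbFE/eqP ->; rewrite inE eq_sym.
  by apply/eqP.
rewrite -big_mkcond sum_nat_const mulnC leq_mul2l /=.
apply: (leq_trans (n := 3 ^ #|supp P|)).
  by rewrite -card_famF; apply: subset_leq_card; apply/subsetP => K; rewrite inE.
by rewrite leq_pexp2l.
Qed.

Lemma update_bound n (P : pstring n) k : weight P <= k -> update_cost P <= 2 * (k.+1 * 3 ^ k).
Proof.
move=> wP; rewrite /update_cost.
have H1 : \sum_(A in powerset (supp P)) (#|A| + 1) <= \sum_(A in powerset (supp P)) k.+1.
  apply: leq_sum => A; rewrite powersetE => sAP.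
  by rewrite addn1 ltnS (leq_trans (subset_leq_card sAP)).
rewrite sum_nat_const card_powerset in H1.
have H2 : 2 ^ #|supp P| <= 3 ^ k.
  have e23 : forall w, 2 ^ w <= 3 ^ w.
    by elim=> // w IHw; rewrite !expnS leq_mul.
  by apply: (leq_trans (e23 _)); rewrite leq_pexp2l.
have H3 : 0 < 3 ^ k by rewrite expn_gt0.
move: H1 H2 H3; set X := 3 ^ k; set Y := 2 ^ _; set S := \sum_(_ in _) _ => H1 H2 H3.
nia.
Qed.

Lemma scan_bound n (prefix : seq (pstring n)) P k :
  (forall Q, Q \in prefix -> weight Q <= k) -> weight P <= k ->
  scan_cost prefix P <= size prefix * (2 * k + 1).
Proof.
move=> Hp wP; rewrite /scan_cost.
apply: (leq_trans (sum_le_seq (c := 2 * k + 1) _)).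
  by move=> Q /mem_take /Hp wQ; lia.
by rewrite size_take_min leq_mul2r geq_minr orbT.
Qed.

Lemma cost_ok n k (rest prefix : seq (pstring n)) D N :
  (forall Q, Q \in prefix -> weight Q <= k) ->
  (forall Q, Q \in rest -> weight Q <= k) ->
  cost_aux prefix D N rest <=
    size rest * (3 * (k.+1 * 3 ^ k)) + (size prefix + size rest) * (2 * k + 1).
Proof.
elim: rest prefix D N => [|P rest IH] prefix D N Hp Hr /=; first by [].
have wP : weight P <= k by apply: Hr; rewrite mem_head.
have L := lookup_bound wP.
case: ifP => _.
  have S := scan_bound Hp wP.
  move: L S; set a := lookup_cost P; set b := scan_cost _ _; move=> L S; nia.
have U := update_bound wP.
have := IH (rcons prefix P) (update D P) N.+1.
rewrite size_rcons => /(_ _ _) H.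
have {H} H : cost_aux (rcons prefix P) (update D P) N.+1 rest <=
  size rest * (3 * (k.+1 * 3 ^ k)) + ((size prefix).+1 + size rest) * (2 * k + 1).
  apply: H.
    by move=> Q; rewrite mem_rcons inE => /orP[/eqP -> | /Hp].
  by move=> Q Qr; apply: Hr; rewrite inE Qr orbT.
move: L U H; set a := lookup_cost P; set b := update_cost P.
set c := cost_aux _ _ _ _; set X := 3 ^ k => L U H; nia.
Qed.

Theorem corollary2 :
  exists C : nat,
  forall (n k : nat) (Ps : seq (pstring n)),
    (forall P, P \in Ps -> weight P <= k) ->
    match certify Ps with
    | AllCommute => forall i j, i < size Ps -> j < size Ps ->
                      pcommute (nth (pId n) Ps i) (nth (pId n) Ps j)
    | Witness j i => j < i < size Ps /\
                      panticommute (nth (pId n) Ps j) (nth (pId n) Ps i)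
    | Fail => False
    end
    /\ cost Ps <= C * size Ps * k.+1 * 3 ^ k.
Proof.
exists 5 => n k Ps Hw; split.
  have := @certify_ok n Ps [::] (fun Q R => ltac:(by rewrite in_nil)).
  rewrite /certify /Dof /=.
  case: (certify_aux _ _ _ _) => // [H i j Hi Hj | j i [lt od]].
    by apply: even_comm; apply: H; apply: mem_nth.
  by split => //; apply: odd_anti.
have := @cost_ok n k Ps [::] (fun _ => 0) 0 (fun Q => ltac:(by rewrite in_nil)) Hw.
rewrite /cost /= add0n.
have H3 : 0 < 3 ^ k by rewrite expn_gt0.
move: H3; set X := 3 ^ k; set c := cost_aux _ _ _ _; move=> H3 H; nia.
Qed.
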